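(* Let $\Gamma$ be a compact abelian group such that for every $a\in\mathbb{N}^{\times}$ the subgroup $\omega_a(\Gamma)$ has finite index in $\Gamma$ and $\ker\omega_a$ is finite, where $\omega_a:\Gamma\to\Gamma$ is $\omega_a(g)=g^a$. Then each $\omega_a$ is a proper local homeomorphism.
   Context: $\mathbb{N}^{\times}$ denotes the set of positive integers; $\Gamma$ is written multiplicatively and is Hausdorff. *)

(* Defs.v *)
From HB Require Import structures.
From mathcomp Require Import all_boot all_order all_algebra.
From mathcomp Require Import all_classical all_reals all_analysis.
Set Implicit Arguments. Unset Strict Implicit. Unset Printing Implicit Defensive.
Import GRing.Theory.
Local Open Scope classical_set_scope.
Local Open Scope ring_scope.

(* The abelian group Gamma is written additively (topologicalZmodType);
   omega_a(g) = g^a becomes g *+ a. *)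
Definition omega (G : zmodType) (a : nat) : G -> G := fun g => g *+ a.

Definition cosets_of (G : zmodType) (H : set G) : set (set G) :=
  [set [set x + h | h in H] | x in [set: G]].

Definition finite_index (G : zmodType) (H : set G) : Prop :=
  finite_set (cosets_of H).

Definition ker_of (G : zmodType) (f : G -> G) : set G := [set g | f g = 0].

Definition local_homeomorphism (X Y : topologicalType) (f : X -> Y) : Prop :=
  forall x : X, exists U : set X,
    [/\ open U /\ U x, open (f @` U),
        {within U, continuous f},
        set_inj U f &
        exists g : Y -> X,
          [/\ {in U, forall u, g (f u) = u}, g @` (f @` U) `<=` U &
              {within f @` U, continuous g}]].

Definition proper_map (X Y : topologicalType) (f : X -> Y) : Prop :=
  continuous f /\ forall K : set Y, compact K -> compact (f @^-1` K).

(* Main.v *)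
Require Import Defs.
From HB Require Import structures.
From mathcomp Require Import all_boot all_order all_algebra.
From mathcomp Require Import all_classical all_reals all_analysis.
Import GRing.Theory.
Local Open Scope classical_set_scope.
Local Open Scope ring_scope.

Section S.
Variable G : topologicalZmodType.

Lemma omega_cont a : continuous (@omega G a).
Proof.
elim: a => [|n IH].
  have -> : @omega G 0 = cst 0 by apply: funext => g; rewrite /omega mulr0n.
  exact: cst_continuous.
have -> : @omega G n.+1 = (fun p : G * G => p.1 + p.2) \o (fun g => (g, @omega G n g)).
  by apply: funext => g; rewrite /omega /= mulrS.
move=> x; apply: continuous_comp; last exact: add_continuous.
by apply: cvg_pair; [exact: cvg_id | exact: IH].
Qed.

Lemma subc_cont (c : G) : continuous (fun y : G => y - c).
Proof.
move=> x; apply: (@continuous_comp _ _ _ (fun y => (y, c)) (fun p : G * G => p.1 - p.2)).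
  by apply: cvg_pair; [exact: cvg_id | exact: cvg_cst].
exact: sub_continuous.
Qed.

Lemma open_shift (W : set G) c : open W -> open [set y | W (y - c)].
Proof. by move=> oW; have /continuousP := subc_cont c; apply. Qed.

Lemma closed_shift (W : set G) c : closed W -> closed [set y | W (y - c)].
Proof. by move=> oW; have /continuous_closedP := subc_cont c; apply. Qed.

Lemma omegaD a x y : @omega G a (x + y) = @omega G a x + @omega G a y.
Proof. by rewrite /omega mulrnDl. Qed.
Lemma omegaN a x : @omega G a (- x) = - @omega G a x.
Proof. by rewrite /omega mulNrn. Qed.
Lemma omegaB a x y : @omega G a (x - y) = @omega G a x - @omega G a y.
Proof. by rewrite omegaD omegaN. Qed.
Lemma omega0 a : @omega G a 0 = 0.
Proof. by rewrite /omega mul0rn. Qed.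

Lemma nbhs_sub (P : set G) : nbhs (0:G) P ->
  exists V : set G, [/\ open V, V 0 & forall v w, V v -> V w -> P (v - w)].
Proof.
move=> nP.
have := @sub_continuous G (0,0) P; rewrite /= subr0 => /(_ nP).
case=> [[A B]] /= [nA nB] sAB.
have nAB : nbhs (0:G) (A `&` B) by apply: filterI.
exists (A `&` B)°; split.
- exact: open_interior.
- exact: nbhs_singleton (nbhs_interior nAB).
- move=> v w /interior_subset [Av _] /interior_subset [_ Bw].
  exact: (sAB (v, w)).
Qed.

Hypothesis hG : hausdorff_space G.
Hypothesis cG : compact [set: G].
Variable a : nat.
Hypothesis fi : finite_index (range (@omega G a)).
Hypothesis fk : finite_set (ker_of (@omega G a)).

Let f := @omega G a.
Let H := range f.

Lemma H_closed : closed H.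
Proof.
apply: compact_closed => //; rewrite /H /f.
apply: continuous_compact => //; apply: continuous_subspaceT; exact: omega_cont.
Qed.

Lemma Hsub x y : H x -> H y -> H (x - y).
Proof. by case=> u _ <- [v _ <-]; exists (u - v) => //; rewrite /f omegaB. Qed.
Lemma H0 : H 0.
Proof. by exists 0 => //; rewrite /f omega0. Qed.

Lemma H_open : open H.
Proof.
set D := cosets_of H `&` [set C | C `<=` ~` H].
have eH : ~` H = \bigcup_(C in D) C.
  apply/seteqP; split.
    move=> y nHy; exists [set y + h | h in H]; last by exists 0; [exact: H0|rewrite addr0].
    split; first by exists y.
    move=> _ [h Hh <-] Hyh; apply: nHy.
    by have := Hsub _ _ Hyh Hh; rewrite addrK.
  by move=> y [C [_ CH] Cy]; apply: CH.
rewrite -[H]setCK openC eH; apply: closed_bigcup.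
  by apply: sub_finite_set fi => C [].
move=> C [[x _ <-] _].
have -> : [set x + h | h in H] = [set z | H (z - x)].
  apply/seteqP; split => z.
    case=> h Hh <-.
by rewrite /= addrAC subrr add0r.
  by move=> Hz; exists (z - x) => //; rewrite addrC subrK.
apply: closed_shift; exact: H_closed.
Qed.
Let K := ker_of f.

Lemma fopen (W : set G) : open W -> open (f @` W).
Proof.
move=> oW.
set S := \bigcup_(k in K) [set y | W (y - k)].
have oS : open S by apply: bigcup_open => k _; exact: open_shift.
have cS : closed (f @` ~` S).
  apply: compact_closed => //; apply: continuous_compact.
    by apply: continuous_subspaceT; exact: omega_cont.
  by apply: (subclosed_compact _ cG) => //; rewrite closedC.
have -> : f @` W = H `&` ~` (f @` ~` S).
  apply/seteqP; split.
    move=> _ [w Ww <-]; split; first by exists w.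
    move=> [z nSz ezw]; apply: nSz; exists (z - w).
      by rewrite /K /ker_of /= /f omegaB -/f ezw subrr.
    by rewrite /= opprB addrC subrK.
  move=> y [[z _ <-]] nz.
  have : S z by apply: contrapT => nSz; apply: nz; exists z.
  case=> k Kk /= Wzk; exists (z - k) => //.
  by move: Kk; rewrite /K /ker_of /= /f omegaB => ->; rewrite subr0.
by apply: openI; [exact: H_open | rewrite openC].
Qed.
Lemma local_homeo : local_homeomorphism f.
Proof.
move=> x.
set K' := K `\ 0.
have fK' : finite_set K' by apply: sub_finite_set fk => y [].
have cK' : closed K'.
  have := @accessible_finite_set_closed G; case=> + _; apply; [exact: hausdorff_accessible | exact: fK'].
have nK : nbhs (0:G) (~` K').
  by apply: open_nbhs_nbhs; split; [rewrite openC | move=> [_ h]; apply: h].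
have [V [oV V0 hV]] := nbhs_sub _ nK.
set U := [set y | V (y - x)].
have oU : open U by exact: open_shift.
have inj : forall u1 u2, U u1 -> U u2 -> f u1 = f u2 -> u1 = u2.
  move=> u1 u2 U1 U2 e.
  have := hV _ _ U1 U2.
  have -> : u1 - x - (u2 - x) = u1 - u2 by rewrite opprB addrA subrK.
  move=> nK'; apply/eqP; rewrite -subr_eq0; apply/eqP.
  apply: contrapT => n0; apply: nK'; split => //.
  by rewrite /K /ker_of /= /f omegaB -/f e subrr.
pose g y := match pselect (exists2 u, U u & f u = y) with
  | left h => s2val (cid2 h) | right _ => 0 end.
have gf : forall u, U u -> g (f u) = u.
  move=> u Uu; rewrite /g; case: pselect => [h|[]]; last by exists u.
  by case: (cid2 h) => u' Uu' e /=; apply: inj.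
exists U; split.
- split => //; rewrite /U /= subrr //.
- exact: fopen.
- by apply: continuous_subspaceT; exact: omega_cont.
- by move=> u1 u2; rewrite !inE => U1 U2; apply: inj.
exists g; split.
- by move=> u; rewrite inE => Uu; apply: gf.
- by move=> _ [_ [u Uu <-] <-]; rewrite gf.
rewrite continuous_open_subspace; last exact: fopen.
move=> y; rewrite inE => -[u Uu <-].
rewrite /continuous_at gf // => B nB.
have oW : open (B° `&` U) by apply: openI => //; exact: open_interior.
have : nbhs (f u) (f @` (B° `&` U)).
  apply: open_nbhs_nbhs; split; first exact: fopen.
  by exists u => //; split => //; exact: nbhs_singleton (nbhs_interior nB).
apply: filterS => _ [w [Bw Uw] <-] /=; rewrite gf //; exact: interior_subset.
Qed.

Lemma proper_f : proper_map f.
Proof.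
split; first exact: omega_cont.
move=> C cC; apply: (subclosed_compact _ cG) => //.
have /continuous_closedP := @omega_cont a; apply.
exact: compact_closed.
Qed.
End S.

Theorem lemma3p3 (G : topologicalZmodType) :
  hausdorff_space G ->
  compact [set: G] ->
  (forall a : nat, (0 < a)%N ->
     finite_index (range (@omega G a)) /\ finite_set (ker_of (@omega G a))) ->
  forall a : nat, (0 < a)%N ->
    local_homeomorphism (@omega G a) /\ proper_map (@omega G a).
Proof.
move=> hG cG hyp a a0; have [fi fk] := hyp a a0.
split; first exact: local_homeo.
exact: proper_f.
Qed.
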